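(* Let $q\ge 1$ be an integer and consider an instance of \textsc{Min-Lin-Eq$(q)$-Full} on the complete graph $G=(V,E)$ with $n=|V|$ vertices, given by integers $c_{uv}\in\{0,\dots,q-1\}$ for every ordered pair of distinct vertices with $c_{vu}\equiv -c_{uv}\pmod q$. Let $\mathrm{OPT_{val}}$ be the minimum, over all assignments $x:V\to\{0,\dots,q-1\}$, of the number of edges $uv$ whose constraint $x_u-x_v\equiv c_{uv}\pmod q$ is violated. Run the Pivot Algorithm: choose a pivot $p\in V$ uniformly at random, set $\ell(p)=0$ and $\ell(v)=c_{vp}$ for every $v\neq p$. Then the Pivot Algorithm is a $3$-approximation algorithm for this problem, i.e. the expected number of edges whose constraints are violated by the labeling $\ell$ is at most $3\cdot \mathrm{OPT_{val}}$.
   Context: \textsc{Min-Lin-Eq$(q)$-Full}: given a complete simple graph $G=(V,E)$, a positive integer $q$, and for each ordered pair $(u,v)$ of distinct vertices an integer $c_{uv}\in[q]=\{0,\dots,q-1\}$ with $c_{vu}=q-c_{uv}\bmod q$, each edge $uv$ carries the constraint $x_u-x_v\equiv c_{uv}\pmod q$ on an assignment $x:V\to[q]$. The goal is to find a minimum-cardinality set of edges whose deletion leaves a satisfiable set of constraints, equivalently an assignment minimizing the number of violated edge constraints. *)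

(* Defs.v *)
From mathcomp Require Import all_boot.
Set Implicit Arguments. Unset Strict Implicit. Unset Printing Implicit Defensive.

(* Instance of Min-Lin-Eq(q)-Full on the complete graph with vertex set V.
   c u v is the integer c_{uv} in [q] = {0,..,q-1} for the ordered pair (u,v). *)

Definition valid_instance (V : finType) (q : nat) (c : V -> V -> nat) : Prop :=
  0 < q /\ (forall u v, u != v -> c u v < q) /\
  (forall u v, u != v -> c v u = (q - c u v) %% q).

(* The constraint x_u - x_v = c_uv (mod q) on edge uv, written in nat as
   x_u = x_v + c_uv (mod q). *)
Definition violated (V : finType) (q : nat) (c : V -> V -> nat) (x : V -> nat)
  (u v : V) : bool := x u != x v + c u v %[mod q].

Definition violated_edges (V : finType) (q : nat) (c : V -> V -> nat)
  (x : V -> nat) : {set {set V}} :=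
  [set e : {set V} | [exists u : V, exists v : V,
      [&& u != v, e == [set u; v] & violated q c x u v]]].

Definition cost (V : finType) (q : nat) (c : V -> V -> nat) (x : V -> nat) : nat :=
  #|violated_edges q c x|.

Definition OPT_val (V : finType) (q : nat) (c : V -> V -> nat) : nat :=
  \big[minn/cost q c (fun _ => 0)]_(x : {ffun V -> 'I_q})
      cost q c (fun v => nat_of_ord (x v)).

Definition pivot_label (V : finType) (c : V -> V -> nat) (p : V) : V -> nat :=
  fun v => if v == p then 0 else c v p.

(* Main.v *)
Require Import Defs.
From mathcomp Require Import all_boot.
From mathcomp Require Import zify.
Set Implicit Arguments. Unset Strict Implicit. Unset Printing Implicit Defensive.

Lemma set2_eq (V : finType) (u v a b : V) : u != v -> a != b ->
  [set u; v] = [set a; b] -> ((u == a) && (v == b)) || ((u == b) && (v == a)).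
Proof.
move=> huv hab E.
have hu : u \in [set a; b] by rewrite -E set21.
have hv : v \in [set a; b] by rewrite -E set22.
have ha : a \in [set u; v] by rewrite E set21.
have hb : b \in [set u; v] by rewrite E set22.
move: hu hv ha hb; rewrite !inE.
have hab' : (a == b) = false by apply/negbTE.
have hba : (b == a) = false by rewrite eq_sym; apply/negbTE.
case/orP=> /eqP ->; case/orP=> /eqP ->; rewrite ?eqxx ?hab' ?hba //=.
all: try by rewrite eqxx in huv.
Qed.

Lemma cards_le_add (T : finType) (A B : {set T}) : #|A :|: B| <= #|A| + #|B|.
Proof. by rewrite -cardsUI leq_addr. Qed.

Lemma edge_count (V : finType) (r : V -> V -> bool) :
  (forall u v, u != v -> r u v = r v u) ->
  2 * #|[set e : {set V} | [exists u : V, exists v : V,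
      [&& u != v, e == [set u; v] & r u v]]]| =
  #|[set uv : V * V | (uv.1 != uv.2) && r uv.1 uv.2]|.
Proof.
move=> hsym.
set E := [set e : {set V} | _].
rewrite -[RHS]sum1dep_card.
rewrite (partition_big (fun uv : V * V => [set uv.1; uv.2]) (mem E)); last first.
  move=> [u v] /= /andP[huv hr]; rewrite inE.
  by apply/existsP; exists u; apply/existsP; exists v; rewrite huv eqxx hr.
rewrite -sum1_card big_distrr /=.
apply: eq_bigr => e; rewrite inE => /existsP[a /existsP[b /and3P[hab /eqP-> hr]]].
rewrite sum1dep_card.
have -> : [set x : V * V | ((x.1 != x.2) && r x.1 x.2) && ([set x.1; x.2] == [set a; b])]
   = [set (a, b); (b, a)].
  apply/setP => [[u v]]; rewrite !inE /=.
  apply/idP/idP.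
  - case/andP=> /andP[huv _] /eqP E2.
    by case/orP: (set2_eq huv hab E2) => /andP[/eqP-> /eqP->]; rewrite eqxx ?orbT.
  - case/orP=> /eqP [-> ->]; first by rewrite hab hr eqxx.
    by rewrite eq_sym hab -hsym // hr setUC eqxx.
rewrite cards2 muln1.
suff -> : (a, b) != (b, a) by [].
apply/negP => /eqP [E1]; by rewrite E1 eqxx in hab.
Qed.

Section S.
Variables (V : finType) (q : nat) (c : V -> V -> nat).
Hypothesis hv : valid_instance q c.

Lemma viol_sym (x : V -> nat) u v : u != v -> violated q c x u v = violated q c x v u.
Proof.
case: hv => hq [hlt hc] huv.
rewrite /violated (hc u v huv); congr negb.
rewrite modnDmr -(eqn_modDr (c u v) (x v)) -addnA subnK ?(ltnW (hlt _ _ huv)) //.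
by rewrite modnDr eq_sym.
Qed.

Definition B (x : V -> nat) := [set uv : V * V | (uv.1 != uv.2) && violated q c x uv.1 uv.2].
Definition N (x : V -> nat) p := [set u : V | (u != p) && violated q c x u p].

Lemma cost_B x : 2 * cost q c x = #|B x|.
Proof. by rewrite /cost /violated_edges edge_count //; apply: viol_sym. Qed.

Lemma triangle x p u v : u != p -> v != p ->
  ~~ violated q c x u v -> ~~ violated q c x u p -> ~~ violated q c x v p ->
  ~~ violated q c (pivot_label c p) u v.
Proof.
move=> hup hvp; rewrite /violated /pivot_label (negbTE hup) (negbTE hvp) !negbK.
move=> /eqP H1 /eqP H2 /eqP H3.
rewrite -(eqn_modDl (x p)) addnA.
by apply/eqP; rewrite -[in RHS]modnDml -H3 modnDml -H1 H2.
Qed.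

Lemma pivot_sub x p : B (pivot_label c p) \subset B x :|: setX (N x p) setT :|: setX setT (N x p).
Proof.
case: hv => hq [hlt hc].
apply/subsetP => [[u v]]; rewrite !inE /= => /andP[huv hviol].
have hup : u != p.
  apply/negP => /eqP E; subst u; move: hviol.
  have hvp : v != p by rewrite eq_sym.
  rewrite /violated /pivot_label eqxx (negbTE hvp) (hc v p hvp).
  by rewrite modnDmr subnKC ?(ltnW (hlt _ _ hvp)) // modnn mod0n eqxx.
have hvp : v != p.
  apply/negP => /eqP E; subst v; move: hviol.
  by rewrite /violated /pivot_label eqxx (negbTE huv) add0n eqxx.
rewrite huv hup hvp /= andbT.
apply/negPn/negP; rewrite !negb_or => /andP[/andP[h1 h2] h3].
by have := triangle hup hvp h1 h2 h3; rewrite hviol.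
Qed.

Lemma sumN x : \sum_p #|N x p| = #|B x|.
Proof.
rewrite /B /N -sum1dep_card [RHS]big_mkcond /=.
rewrite -(pair_bigA _ (fun u v => if (u != v) && violated q c x u v then 1 else 0)) /=.
rewrite exchange_big /=.
apply: eq_bigr => p _; by rewrite -sum1dep_card big_mkcond.
Qed.

Lemma main x : \sum_(p : V) cost q c (pivot_label c p) <= 3 * #|V| * cost q c x.
Proof.
rewrite -(leq_pmul2l (ltn0Sn 1)) big_distrr /=.
under eq_bigr do rewrite cost_B.
apply: (@leq_trans (\sum_p (#|B x| + #|N x p| * #|V| + #|V| * #|N x p|))).
  apply: leq_sum => p _.
  apply: leq_trans (subset_leq_card (pivot_sub x p)) _.
  apply: leq_trans (cards_le_add _ _) _.
  rewrite !cardsX cardsT leq_add2r.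
  by apply: leq_trans (cards_le_add _ _) _; rewrite cardsX cardsT.
rewrite !big_split /= sum_nat_const -big_distrl -big_distrr /= sumN -cost_B.
rewrite cardT /=; set n := size _; set k := cost q c x. nia.
Qed.
End S.

Lemma opt_attained (V : finType) (q : nat) (c : V -> V -> nat) :
  exists x : V -> nat, OPT_val q c = cost q c x.
Proof.
rewrite /OPT_val.
apply: (big_ind (fun m => exists x : V -> nat, m = cost q c x)).
- by exists (fun _ => 0).
- move=> a b [xa ->] [xb ->]; rewrite /minn; case: ifP => _; by eexists.
- move=> x _; by exists (fun v => nat_of_ord (x v)).
Qed.

Theorem theorem1 (V : finType) (q : nat) (c : V -> V -> nat) :
  valid_instance q c ->
  0 < #|V| ->
  \sum_(p : V) cost q c (pivot_label c p) <= 3 * #|V| * OPT_val q c.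
Proof.
move=> hv _; have [x ->] := opt_attained q c.
exact: main.
Qed.
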